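(* Let $\delta_\ell=94/194$. Let $G=(V,E)$ be an $(n-4)$-regular graph on $n>4$ nodes in which every clique has at most $\delta_\ell n$ nodes. Let $\emptyset\ne V'\subseteq V$ with $|V'|=tn$ and $0<t\le 1/2$. Then $$\mathsf M(V')\le\frac{2\delta_\ell-\tfrac12}{n-4}.$$
   Context: For a finite simple undirected graph $G=(V,E)$ with $m=|E|\ge1$ edges, degrees $d_v$, and $a_{u,v}=1$ if $\{u,v\}\in E$ and $0$ otherwise: for $C\subseteq V$, $\mathsf M(C)=\frac{1}{2m}\sum_{u\in C}\sum_{v\in C}\big(a_{u,v}-\frac{d_ud_v}{2m}\big)$, the sum over all ordered pairs including $u=v$. *)

(* Defs.v *)
From mathcomp Require Import all_boot all_order all_algebra.
Set Implicit Arguments. Unset Strict Implicit. Unset Printing Implicit Defensive.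
Import Order.TTheory GRing.Theory Num.Theory.
Local Open Scope ring_scope.

Definition simple_graph (T : finType) (e : rel T) : Prop :=
  symmetric e /\ irreflexive e.

Definition deg (T : finType) (e : rel T) (v : T) : nat := #|[set u | e v u]|.

Definition two_m (T : finType) (e : rel T) : rat := (\sum_(v : T) deg e v)%:R.

Definition adj (T : finType) (e : rel T) (u v : T) : rat := (e u v)%:R.

Definition modularity (T : finType) (e : rel T) (C : {set T}) : rat :=
  (two_m e)^-1 * \sum_(u in C) \sum_(v in C)
     (adj e u v - (deg e u)%:R * (deg e v)%:R / two_m e).

Definition is_clique (T : finType) (e : rel T) (K : {set T}) : Prop :=
  forall u v, u \in K -> v \in K -> u != v -> e u v.

Definition delta_l : rat := 94%:R / 194%:R.

(* Main.v *)
Require Import Defs.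
From mathcomp Require Import all_boot all_order all_algebra.
Import Order.TTheory GRing.Theory Num.Theory.
Local Open Scope ring_scope.
Set Implicit Arguments. Unset Strict Implicit.

Lemma four_half (R : numFieldType) (s : R) : 4%:R * s / 2%:R = s + s.
Proof.
have -> : (4%:R : R) = 2%:R * 2%:R by rewrite -natrM.
rewrite mulrAC mulfK ?pnatr_eq0 //.
by rewrite mulr_natl mulr2n.
Qed.

Lemma keyF (R : numFieldType) (s : R) : 4%:R^-1 <= s -> s <= 2%:R^-1 ->
  s * (4%:R * s - 1) <= (s + s) - 2%:R^-1.
Proof.
move=> h1 h2.
have h : (4%:R * s - 1) * (s - 2%:R^-1) <= 0.
  apply: mulr_ge0_le0; last by rewrite subr_le0.
  rewrite subr_ge0 -ler_pdivrMl ?ltr0n // mulr1 //.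
move: h; rewrite mulrBr [(_ - 1) * s]mulrBl mulrBl mul1r four_half.
by rewrite mul1r subr_le0 mulrBr mulr1 [s * (_ * _)]mulrC.
Qed.

Lemma scalA (R : realFieldType) (dl t : R) : 4%:R^-1 <= dl -> dl <= 2%:R^-1 ->
  0 <= t -> t <= dl -> t * (4%:R * t - 1) <= dl + dl - 2%:R^-1.
Proof.
move=> h1 h2 h0 ht.
have hd : 0 <= 4%:R * dl - 1 by rewrite subr_ge0 -ler_pdivrMl ?ltr0n // mulr1.
apply: (le_trans _ (keyF h1 h2)).
have [hn|hp] := leP (4%:R * t - 1) 0.
  apply: (le_trans _ (mulr_ge0 (le_trans h0 ht) hd)).
  exact: mulr_ge0_le0.
apply: ler_pM => //; first exact: ltW.
by rewrite lerD2r ler_wpM2l ?ler0n.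
Qed.

Lemma alg (R : realFieldType) (dl n N S t : R) :
  4%:R^-1 <= dl -> dl <= 2%:R^-1 -> 4%:R < n -> 0 <= N ->
  S + t*n + (N + N) <= (t*n)*(t*n) -> t*n <= dl*n + N -> 0 < t -> t <= 2%:R^-1 ->
  (n*(n-4%:R))^-1 * (S - (t*n)*(t*n)*((n-4%:R)*(n-4%:R)/(n*(n-4%:R))))
     <= (2%:R*dl - 1/2%:R)/(n-4%:R).
Proof.
move=> h1 h2 h4 hN hS hk ht0 ht2.
have hn : 0 < n by apply: (lt_trans _ h4); rewrite ltr0n.
have hd : 0 < n - 4%:R by rewrite subr_gt0.
set d := n - 4%:R. set k := t * n.
have hn0 : n != 0 by rewrite gt_eqF.
have hd0 : d != 0 by rewrite gt_eqF.
have e1 : d * d / (n * d) = d / n.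
  by rewrite [n * d]mulrC invfM -mulrA mulVKf.
rewrite e1 ler_pdivlMr // mulrAC invfM -(mulrA n^-1) mulVf // mulr1.
rewrite mulrC ler_pdivrMr //.
have e2 : k * k * (d / n) = k * k - k * (4%:R * t).
  rewrite /d mulrBl divff // mulrBr mulr1; congr (_ - _).
  by rewrite -mulrA; congr (_ * _); rewrite /k mulrA [t * n * _]mulrAC mulfK // mulrC.
rewrite e2.
have hc : 2%:R * dl - 1 / 2%:R = dl + dl - 2%:R^-1 by rewrite mul1r mulr_natl mulr2n.
rewrite hc.
apply: (@le_trans _ _ (k * (4%:R * t) - k - (N + N))).
  rewrite opprB addrC -addrA -[k * (4%:R * t) - k - (N + N)]addrA lerD2l addrC lerBlDr.
  move: hS; rewrite -lerBrDr -lerBrDr => hS.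
  by apply: (le_trans hS); rewrite /k [X in _ <= X]addrC addrA addrAC.
rewrite -{2}(mulr1 k) -mulrBr.
have [hA|hB] := leP t dl.
  apply: (@le_trans _ _ (k * (4%:R * t - 1))); first by rewrite gerBl addr_ge0.
  by rewrite /k mulrAC ler_pM2r // scalA // ltW.
apply: (@le_trans _ _ (k * (4%:R * t - 1) - ((k - dl * n) + (k - dl * n)))).
  by rewrite lerD2l lerN2 lerD // lerBlDr addrC.
have h1t : 4%:R^-1 <= t := le_trans h1 (ltW hB).
have e3 : k * (4%:R * t - 1) - ((k - dl * n) + (k - dl * n))
   = (t * (4%:R * t - 1) - ((t - dl) + (t - dl))) * n.
  by rewrite /k [X in _ = X]mulrBl [(_ + _) * n]mulrDl ![(t - dl) * n]mulrBl mulrAC.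
rewrite e3 ler_pM2r // lerBlDr.
apply: (le_trans (keyF h1t ht2)).
by rewrite [X in _ <= X]addrAC addrACA [dl + (t - dl)]addrC subrK.
Qed.

Lemma dge : 4%:R^-1 <= delta_l :> rat.
Proof.
rewrite /delta_l ler_pdivlMr; last by rewrite ltr0n.
rewrite mulrC ler_pdivrMr; last by rewrite ltr0n.
by rewrite -natrM ler_nat.
Qed.
Lemma dle : delta_l <= 2%:R^-1 :> rat.
Proof.
rewrite /delta_l ler_pdivrMr; last by rewrite ltr0n.
rewrite mulrC ler_pdivlMr; last by rewrite ltr0n.
by rewrite -natrM ler_nat.
Qed.

Section Comb.
Variables (T : finType) (e : rel T).
Hypothesis esym : symmetric e.
Hypothesis eirr : irreflexive e.

Definition Pr (u v : T) : bool := ~~ e u v && (enum_rank v < enum_rank u)%N.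

Lemma rank_cases (u v : T) : u != v ->
  ((enum_rank v < enum_rank u)%N || (enum_rank u < enum_rank v)%N).
Proof.
move=> neq; case: (ltngtP (enum_rank u) (enum_rank v)) => //= h.
by rewrite (enum_rank_inj (val_inj h)) eqxx in neq.
Qed.

Lemma pair_bound (u v : T) :
  (e u v + (u == v) + Pr u v + Pr v u <= 1)%N.
Proof.
rewrite /Pr; case: (eqVneq u v) => [->|neq].
  by rewrite eirr ltnn.
case h: (e u v) => /=.
  by rewrite esym h.
rewrite esym h /=.
case/orP: (rank_cases neq) => h1.
  by rewrite h1 (ltnNge (enum_rank u) (enum_rank v)) (ltnW h1).
by rewrite h1 (ltnNge (enum_rank v) (enum_rank u)) (ltnW h1).
Qed.

Definition Nn (V' : {set T}) : nat := (\sum_(u in V') \sum_(v in V') Pr u v)%N.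

Lemma count_bound (V' : {set T}) :
  (\sum_(u in V') \sum_(v in V') nat_of_bool (e u v) + #|V'| + (Nn V' + Nn V')
     <= #|V'| * #|V'|)%N.
Proof.
have H : (\sum_(u in V') \sum_(v in V')
    (nat_of_bool (e u v) + nat_of_bool (u == v) + Pr u v + Pr v u) <= #|V'| * #|V'|)%N.
  apply: (@leq_trans (\sum_(u in V') \sum_(v in V') 1)%N).
    by apply: leq_sum => u _; apply: leq_sum => v _; apply: pair_bound.
  under eq_bigr => u _ do rewrite sum1_card.
  by rewrite sum_nat_const.
have E1 : (\sum_(u in V') \sum_(v in V') nat_of_bool (u == v))%N = #|V'|.
  rewrite -sum1_card; apply: eq_bigr => u hu.
  rewrite (bigD1 u) //= eqxx big1 ?addn0 // => v /andP[_ hv].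
  by rewrite eq_sym (negbTE hv).
have E2 : (\sum_(u in V') \sum_(v in V') Pr v u)%N = Nn V'.
  by rewrite /Nn exchange_big.
move: H; under eq_bigr => u _ do rewrite !big_split.
by rewrite !big_split /= E1 E2 /Nn !addnA.
Qed.

Lemma clique_part (V' : {set T}) :
  let R := [set u in V' | [exists v in V', Pr u v]] in
  is_clique e (V' :\: R) /\ (#|V' :&: R| <= Nn V')%N.
Proof.
move=> R; split.
  move=> u v /setDP[hu hnu] /setDP[hv hnv] neq.
  apply/idPn => hne.
  case/orP: (rank_cases neq) => h1.
    move/negP: hnu; apply; rewrite inE hu /=; apply/existsP; exists v.
    by rewrite hv /Pr hne h1.
  move/negP: hnv; apply; rewrite inE hv /=; apply/existsP; exists u.
  by rewrite hu /Pr esym hne h1.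
rewrite -sum1_card.
apply: (@leq_trans (\sum_(u in V' :&: R) \sum_(v in V') Pr u v)%N).
  apply: leq_sum => u; rewrite !inE => /andP[hu /andP[_ /existsP[v /andP[hv hp]]]].
  by rewrite (bigD1 v) //= hp.
by rewrite /Nn [X in (_ <= X)%N](big_setID R) /= leq_addr.
Qed.

End Comb.
Theorem lemma5 (T : finType) (e : rel T) (V' : {set T}) (t : rat) :
  simple_graph e ->
  (4 < #|T|)%N ->
  (forall v : T, deg e v = (#|T| - 4)%N) ->
  (forall K : {set T}, is_clique e K -> (#|K|%:R : rat) <= delta_l * (#|T|%:R)) ->
  V' != set0 ->
  (#|V'|%:R : rat) = t * (#|T|%:R) ->
  0 < t -> t <= 1 / 2%:R ->
  modularity e V' <= (2%:R * delta_l - 1 / 2%:R) / ((#|T| - 4)%N)%:R.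
Proof.
move=> [esym eirr] hn4 hdeg hcl hne hk ht0 ht2.
set n := #|T| in hn4 hdeg hcl hk *.
have h4n : (4 <= n)%N := ltnW hn4.
have hdegR : forall v, (deg e v)%:R = n%:R - 4%:R :> rat.
  by move=> v; rewrite hdeg natrB.
have h2m : two_m e = n%:R * (n%:R - 4%:R).
  rewrite /two_m (eq_bigr (fun=> (n - 4)%N)) //.
  rewrite sum_nat_const natrM natrB //.
rewrite /modularity h2m (natrB _ h4n).
under eq_bigr => u _ do under eq_bigr => v _ do rewrite !hdegR.
under eq_bigr => u _ do rewrite sumrB sumr_const.
rewrite sumrB sumr_const /adj.
under eq_bigr => u _ do rewrite -natr_sum.
have ec : forall c : rat, c *+ #|V'| *+ #|V'| = t * n%:R * (t * n%:R) * c.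
  by move=> c; rewrite -[(c *+ _) *+ _]mulr_natl -[c *+ _]mulr_natl hk mulrA.
rewrite -natr_sum ec.
apply: (@alg _ delta_l n%:R (Nn e V')%:R).
- exact: dge.
- exact: dle.
- by rewrite ltr_nat.
- exact: ler0n.
- by rewrite -hk -!natrD -natrM ler_nat; apply: count_bound.
- rewrite -hk.
  have [hcq hcard] := clique_part esym V'.
  set R := [set u in V' | [exists v in V', Pr e u v]] in hcq hcard.
  rewrite -(cardsID R V') natrD addrC.
  apply: lerD; first exact: hcl.
  by rewrite ler_nat.
- exact: ht0.
- by move: ht2; rewrite mul1r.
Qed.
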